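(* Let $n\ge 3$. The restriction map $\rho$, sending an optimal acyclic matching $V$ on $\Delta^n$ to the set of pairs of $V$ lying in $\Delta^n_{(n-2)}$, is a surjection from the set of optimal acyclic matchings on $\Delta^n$ onto the set of optimal acyclic matchings on $\Delta^n_{(n-2)}$, and every fiber of $\rho$ has exactly $n+1$ elements. Consequently $$f(n)=(n+1)\cdot\bigl|\{\text{top-dimensional simplices of }\mathcal{M}(\Delta^n_{(n-2)})\}\bigr|,$$ where $f(n)$ is the number of optimal acyclic matchings on $\Delta^n$.
   Context: All simplicial complexes are finite abstract simplicial complexes; simplices are nonempty. $\Delta^n$ is the simplicial complex of all nonempty subsets of an $(n+1)$-element vertex set; $\Delta^n_{(k)}$ denotes its $k$-skeleton. The Hasse diagram $\mathcal{H}(K)$ of $K$ is the directed graph whose vertices are the simplices of $K$, with an edge $\sigma\to\tau$ whenever $\sigma\subsetneq\tau$ and $\dim\tau=\dim\sigma+1$. A matching on $\mathcal{H}(K)$ is a set $W$ of edges of $\mathcal{H}(K)$, no two sharing a vertex; an edge $\sigma\to\tau$ in $W$ is called a pair $(\sigma,\tau)$, and a simplex lying in no pair is called critical. $W$ is acyclic if the directed graph obtained from $\mathcal{H}(K)$ by reversing every edge in $W$ has no directed cycle. The complex of discrete Morse matchings $\mathcal{M}(K)$ is the simplicial complex whose vertices are the edges of $\mathcal{H}(K)$ and whose simplices are the nonempty acyclic matchings (a matching with $k+1$ pairs is a $k$-simplex). An acyclic matching is optimal if it minimizes the total number of critical simplices among all acyclic matchings on $K$; equivalently it is a top-dimensional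 simplex of $\mathcal{M}(K)$. *)

(* Defs.v *)
From mathcomp Require Import all_boot.
Set Implicit Arguments. Unset Strict Implicit. Unset Printing Implicit Defensive.

Section Defs.
Variable T : finType.

(* A finite abstract simplicial complex on vertex type T is given by its set of
   simplices K : {set {set T}} (nonempty subsets, closed under nonempty subsets).
   A simplex s has dimension #|s| - 1. *)

Definition hasse_edge (K : {set {set T}}) (p : {set T} * {set T}) : bool :=
  [&& p.1 \in K, p.2 \in K, p.1 \proper p.2 & #|p.2| == #|p.1|.+1].

Definition share_vertex (p q : {set T} * {set T}) : bool :=
  [|| p.1 == q.1, p.1 == q.2, p.2 == q.1 | p.2 == q.2].

Definition matching (K : {set {set T}}) (W : {set {set T} * {set T}}) : bool :=
  [forall p in W, hasse_edge K p] &&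
  [forall p in W, forall q in W, (p != q) ==> ~~ share_vertex p q].

Definition modified_rel (K : {set {set T}}) (W : {set {set T} * {set T}})
  : rel {set T} :=
  fun x y => (hasse_edge K (x, y) && ((x, y) \notin W)) || ((y, x) \in W).

Definition has_directed_cycle (e : rel {set T}) : bool :=
  [exists x, exists y, e x y && connect e y x].

Definition acyclic_matching (K : {set {set T}}) (W : {set {set T} * {set T}})
  : bool :=
  matching K W && ~~ has_directed_cycle (modified_rel K W).

Definition critical (K : {set {set T}}) (W : {set {set T} * {set T}})
  : {set {set T}} :=
  [set s in K | [forall p in W, (p.1 != s) && (p.2 != s)]].

Definition optimal (K : {set {set T}}) (W : {set {set T} * {set T}}) : bool :=
  acyclic_matching K W &&
  [forall W' : {set {set T} * {set T}},
     acyclic_matching K W' ==> (#|critical K W| <= #|critical K W'|)].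

(* top-dimensional simplices of the complex of discrete Morse matchings M(K):
   simplices are nonempty acyclic matchings, a matching with k+1 pairs is a
   k-simplex; top-dimensional = of maximal dimension. *)
Definition M_top_simplex (K : {set {set T}}) (W : {set {set T} * {set T}})
  : bool :=
  [&& acyclic_matching K W, W != set0 &
   [forall W' : {set {set T} * {set T}},
     (acyclic_matching K W' && (W' != set0)) ==> (#|W'| <= #|W|)]].

Definition skeleton (K : {set {set T}}) (k : nat) : {set {set T}} :=
  [set s in K | #|s| <= k.+1].

Definition restrict (L : {set {set T}}) (W : {set {set T} * {set T}})
  : {set {set T} * {set T}} :=
  [set p in W | (p.1 \in L) && (p.2 \in L)].

End Defs.

Definition Delta (n : nat) : {set {set 'I_n.+1}} := [set s | s != set0].

Definition f (n : nat) : nat :=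
  #|[set V : {set {set 'I_n.+1} * {set 'I_n.+1}} | optimal (Delta n) V]|.

(* Main.v *)
Require Import Defs.
From mathcomp Require Import all_boot zify.
Set Implicit Arguments. Unset Strict Implicit. Unset Printing Implicit Defensive.

Section Generic.
Variable T : finType.
Implicit Types (e : rel {set T}) (K : {set {set T}}) (W : {set {set T} * {set T}}).

Lemma connect_mono e (mu : {set T} -> nat) :
  (forall x y, e x y -> mu x < mu y) -> forall x y, connect e x y -> mu x <= mu y.
Proof.
move=> H x y /connectP [p pth ->]; elim: p x pth => //= z p IH x /andP[exz pz].
exact: leq_trans (ltnW (H _ _ exz)) (IH _ pz).
Qed.

Lemma pot_acyc e (mu : {set T} -> nat) :
  (forall x y, e x y -> mu x < mu y) -> ~~ has_directed_cycle e.
Proof.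
move=> H; apply/existsP => [[x /existsP [y /andP [exy cyx]]]].
have := connect_mono H cyx; have := H _ _ exy; lia.
Qed.

Definition anc e (z : {set T}) := #|[set u | connect e u z]|.

Lemma acyc_pot e : ~~ has_directed_cycle e -> forall x y, e x y -> anc e x < anc e y.
Proof.
move=> Hc x y exy; apply: proper_card; apply/properP; split.
  apply/subsetP => u; rewrite !inE => cux; exact: connect_trans cux (connect1 exy).
exists y; rewrite !inE ?connect0 //; apply/negP => cyx.
by move/negP: Hc; apply; apply/existsP; exists x; apply/existsP; exists y; rewrite exy.
Qed.

Lemma anc_path e : ~~ has_directed_cycle e ->
  forall a z b, e a z -> connect e z b -> anc e a < anc e b.
Proof.
move=> Hc a z b eaz czb; apply: leq_trans (acyc_pot Hc eaz) _.
exact: (@connect_mono e (anc e) (acyc_pot Hc) _ _ czb).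
Qed.

Lemma no_chain_succ e (S : {set {set T}}) : ~~ has_directed_cycle e -> S != set0 ->
  ~ (forall a, a \in S -> exists2 b, b \in S & exists z, e a z && connect e z b).
Proof.
move=> Hc /set0Pn [a0 a0S] H.
case: (@arg_maxnP _ a0 (mem S) (anc e) a0S) => a aS amax.
have [b bS [z /andP [eaz czb]]] := H a aS.
have := amax b bS; have := anc_path Hc eaz czb; lia.
Qed.

Lemma no_chain_pred e (S : {set {set T}}) : ~~ has_directed_cycle e -> S != set0 ->
  ~ (forall a, a \in S -> exists2 b, b \in S & exists z, e b z && connect e z a).
Proof.
move=> Hc /set0Pn [a0 a0S] H.
case: (@arg_minnP _ a0 (mem S) (anc e) a0S) => a aS amin.
have [b bS [z /andP [ebz cza]]] := H a aS.
have := amin b bS; have := anc_path Hc ebz cza; lia.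
Qed.

Lemma matchingE K W : matching K W ->
  (forall p, p \in W -> hasse_edge K p) /\
  (forall p q, p \in W -> q \in W -> share_vertex p q -> p = q).
Proof.
case/andP => /forallP H1 /forallP H2; split.
  by move=> p pW; have := H1 p; rewrite pW.
move=> p q pW qW sh; have := H2 p; rewrite pW /= => /forallP /(_ q); rewrite qW /=.
by case: eqP => // _; rewrite sh.
Qed.

Lemma hasseE K x y : hasse_edge K (x, y) =
  [&& x \in K, y \in K, x \proper y & #|y| == #|x|.+1].
Proof. by []. Qed.

Lemma match11 K W p q : matching K W -> p \in W -> q \in W -> p.1 = q.1 -> p = q.
Proof. by move=> /matchingE [_ H] pW qW e; apply: H => //; rewrite /share_vertex e eqxx. Qed.
Lemma match22 K W p q : matching K W -> p \in W -> q \in W -> p.2 = q.2 -> p = q.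
Proof. by move=> /matchingE [_ H] pW qW e; apply: H => //; rewrite /share_vertex e eqxx !orbT. Qed.
Lemma match12 K W p q : matching K W -> p \in W -> q \in W -> p.1 = q.2 -> False.
Proof.
move=> M pW qW e; have pq : p = q.
  by case/matchingE: M => _ H; apply: H => //; rewrite /share_vertex e eqxx !orbT.
case/matchingE: M => H _; have := H _ qW; move: e; rewrite pq => e.
case/and4P => _ _; rewrite e; case: q {pW qW pq e} => a b /=; by rewrite properE andbN.
Qed.

Lemma critP K W s : reflect (s \in K /\ forall p, p \in W -> p.1 != s /\ p.2 != s)
  (s \in critical K W).
Proof.
rewrite inE; apply: (iffP andP) => [[sK /forallP H]|[sK H]]; split => //.
  by move=> p pW; have := H p; rewrite pW /= => /andP.
by apply/forallP => p; apply/implyP => pW; have [-> ->] := H p pW.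
Qed.

Lemma crit_count K W : matching K W -> #|critical K W| + #|W| + #|W| = #|K|.
Proof.
move=> M; have [HE HS] := matchingE M.
set A1 := [set p.1 | p in W]; set A2 := [set p.2 | p in W].
have c1 : #|A1| = #|W| by apply: card_in_imset => p q pW qW; exact: match11 M pW qW.
have c2 : #|A2| = #|W| by apply: card_in_imset => p q pW qW; exact: match22 M pW qW.
have dis : A1 :&: A2 = set0.
  apply/setP => s; rewrite !inE; apply/negbTE/negP => /andP [/imsetP [p pW ->] /imsetP [q qW e]].
  exact: match12 M pW qW e.
have sub : A1 :|: A2 \subset K.
  apply/subsetP => s; rewrite inE => /orP [] /imsetP [p pW ->];
  by have := HE _ pW; case/and4P.
have cr : critical K W = K :\: (A1 :|: A2).
  apply/setP => s; apply/critP/idP.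
    move=> [sK H]; rewrite !inE sK andbT negb_or; apply/andP; split; apply/imsetP => [[p pW e]];
    by have [] := H p pW; rewrite e eqxx.
  rewrite !inE negb_or => /andP [/andP [n1 n2] sK]; split => // p pW.
  split; apply/eqP => e; [move/imsetP: n1|move/imsetP: n2]; apply; exists p => //.
have := cardsUI A1 A2; rewrite dis cards0 addn0 c1 c2 => u.
rewrite cr cardsDS //; have := subset_leq_card sub; rewrite u => h; by rewrite -addnA subnK.
Qed.


Lemma noncritP K W s : s \in K -> s \notin critical K W ->
  exists2 p, p \in W & (p.1 = s \/ p.2 = s).
Proof.
move=> sK; rewrite inE sK /= => /forallPn [p]; rewrite negb_imply => /andP [pW].
by rewrite negb_and !negbK => /orP [] /eqP e; exists p => //; [left|right].
Qed.

Lemma vertex_crit (X : {set {set T}}) W m (x0 : T) :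
  (forall s, (s \in X) = (0 < #|s|) && (#|s| <= m)) -> 1 < m ->
  acyclic_matching X W -> exists2 v : {set T}, #|v| = 1 & v \in critical X W.
Proof.
move=> HX hm /andP [M Hc].
have [HE HS] := matchingE M.
case: (boolP [exists v : {set T}, (#|v| == 1) && (v \in critical X W)]).
  by case/existsP => v /andP [/eqP v1 vc]; exists v.
move/existsPn => Hn; exfalso.
apply: (@no_chain_pred (modified_rel X W) [set v : {set T} | #|v| == 1] Hc).
  by apply/set0Pn; exists [set x0]; rewrite inE cards1.
move=> a; rewrite inE => /eqP a1.
have aX : a \in X by rewrite HX a1; apply/andP; split => //; apply: ltnW.
have := Hn a; rewrite a1 eqxx /= => /(noncritP aX) [p pW [e|e]]; last first.
  have := HE _ pW; rewrite /hasse_edge e a1 => /and4P [p1X _ _ /eqP c].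
  by move: p1X; rewrite HX; case: (#|p.1|) c.
have := HE _ pW; rewrite /hasse_edge e a1 => /and4P [_ p2X ap2 /eqP c2].
set b := p.2 :\: a.
have ca : #|p.2 :&: a| = 1 by rewrite (setIidPr (proper_sub ap2)) a1.
have b1 : #|b| = 1 by rewrite /b cardsD ca c2.
exists b; first by rewrite inE b1.
exists p.2; apply/andP; split; last first.
  apply: connect1; rewrite /modified_rel; apply/orP; right.
  by rewrite -e -surjective_pairing.
have bX : b \in X by rewrite HX b1 /= ltnW.
apply/orP; left; rewrite /hasse_edge /= b1 c2 eqxx p2X bX /=.
rewrite properEcard subsetDl b1 c2 /=; apply/negP => bW.
have := HS _ _ pW bW; rewrite /share_vertex /= eqxx !orbT => /(_ isT) pe.
have : b = a by rewrite -e pe.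
move=> ba; have : a \subset b by rewrite ba.
move/subsetP; have : a != set0 by rewrite -card_gt0 a1.
case/set0Pn => z za /(_ z za); by rewrite inE za.
Qed.

End Generic.

Section Concrete.
Variable n : nat.
Hypothesis hn : 3 <= n.
Local Notation T := 'I_n.+1.
Local Notation K := (Delta n).
Local Notation L := (skeleton (Delta n) (n - 2)).
Local Notation top := [set: T].
Definition Fc (j : T) : {set T} := ~: [set j].

Lemma cardT : #|T| = n.+1. Proof. by rewrite card_ord. Qed.
Lemma card_le (s : {set T}) : #|s| <= n.+1. Proof. by have := max_card s; rewrite cardT. Qed.

Lemma inK (s : {set T}) : (s \in K) = (0 < #|s|) && (#|s| <= n.+1).
Proof. by rewrite !inE card_gt0 card_le andbT. Qed.
Lemma inL (s : {set T}) : (s \in L) = (0 < #|s|) && (#|s| <= (n - 1)).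
Proof.
rewrite !inE card_gt0; case: (s == set0) => //=.
by congr (_ <= _); case: n hn => [|[|[|k]]].
Qed.
Lemma LK s : s \in L -> s \in K. Proof. by rewrite inL inK; case/andP => -> /=; lia. Qed.

Lemma cardF j : #|Fc j| = n. Proof. by rewrite /Fc cardsCs setCK cards1 cardT subn1. Qed.
Lemma cardtop : #|top| = n.+1. Proof. by rewrite cardsT cardT. Qed.
Lemma Fc_inj : injective Fc. Proof.
move=> j k /(congr1 (@setC _)); rewrite !setCK => /setP /(_ j); by rewrite !inE eqxx => /esym/eqP.
Qed.
Lemma facetP (s : {set T}) : #|s| = n -> exists k, s = Fc k.
Proof.
move=> c; have : #|~: s| == 1 by rewrite cardsCs setCK cardT c subSnn.
case/cards1P => k e; exists k; by rewrite /Fc -e setCK.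
Qed.
Lemma topP (s : {set T}) : #|s| = n.+1 -> s = top.
Proof. move=> c; apply/eqP; by rewrite eqEcard subsetT cardtop c leqnn. Qed.
Lemma FK j : Fc j \in K. Proof. by rewrite inK cardF; lia. Qed.
Lemma FnL j : Fc j \notin L. Proof. rewrite inL cardF. move: hn. lia. Qed.
Lemma topK : top \in K. Proof. by rewrite inK cardtop leqnn. Qed.
Lemma topnL : top \notin L. Proof. by rewrite inL cardtop; lia. Qed.
Lemma notinF j k : (k \notin Fc j) = (k == j). Proof. by rewrite !inE negbK. Qed.

Lemma inK_L (s : {set T}) : s \in K -> #|s| <= (n - 1) -> s \in L.
Proof. by rewrite inK inL => /andP [-> _]. Qed.

Lemma KminusL : K :\: L = top |: [set Fc j | j in T].
Proof.
apply/setP => s; rewrite in_setD in_setU1; apply/idP/idP.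
  case/andP => sL sK; move: (sK); rewrite inK => /andP [s0 sle].
  move: sL; rewrite inL s0 /= -ltnNge => h.
  have [e|ne] := eqVneq #|s| n.+1; first by rewrite (topP e) eqxx.
  have e : #|s| = n by move: ne h sle => /eqP; set c := #|s|; lia.
  have [k ek] := facetP e.
  by apply/orP; right; apply/imsetP; exists k.
case/orP => [/eqP -> | /imsetP [j _ ->]].
  by rewrite topnL topK.
by rewrite FnL FK.
Qed.

Lemma cardKL : #|K| = #|L| + n.+2.
Proof.
have sub : L \subset K by apply/subsetP => s /LK.
have : #|K :\: L| = n.+2.
  rewrite KminusL cardsU1 card_imset; last exact: Fc_inj.
  rewrite cardT; have -> : top \notin [set Fc j | j in T] => //.
  apply/imsetP => [[j _ e]]; have := cardF j; rewrite -e cardtop; lia.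
by rewrite cardsDS // => h; have := subset_leq_card sub; lia.
Qed.


Definition x0 : T := ord0.
Definition V0 : {set {set T} * {set T}} :=
  [set (s, x0 |: s) | s in [set s : {set T} | (s != set0) && (x0 \notin s)]].

Lemma V0P p : reflect (exists2 s : {set T}, (s != set0) && (x0 \notin s) & p = (s, x0 |: s))
  (p \in V0).
Proof.
apply: (iffP imsetP) => [[s] | [s]]; rewrite ?inE => h ->; by exists s; rewrite ?inE.
Qed.

Lemma cardU1x (s : {set T}) : x0 \notin s -> #|x0 |: s| = #|s|.+1.
Proof. by move=> h; rewrite cardsU1 h. Qed.

Lemma V0_matching : matching K V0.
Proof.
apply/andP; split.
  apply/forallP => p; apply/implyP => /V0P [s /andP [s0 xs] ->].
  rewrite /hasse_edge /= !inE s0 /=; apply/and3P; split.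
  - by apply/set0Pn; exists x0; rewrite setU11.
  - by rewrite properEcard subsetU1 cardU1x // ltnSn.
  - by rewrite cardU1x.
apply/forallP => p; apply/implyP => /V0P [s /andP [s0 xs] ->].
apply/forallP => q; apply/implyP => /V0P [t /andP [t0 xt] ->].
apply/implyP => ne; rewrite /share_vertex /=; apply/negP => /or4P [] /eqP e.
- by move: ne; rewrite e eqxx.
- by move: xs; rewrite e setU11.
- by move: xt; rewrite -e setU11.
- by move: ne; rewrite -(setU1K xs) e (setU1K xt) eqxx.
Qed.

Definition phi0 (z : {set T}) := (n + 3) * #|z :\ x0| + (n + 2 - #|z|).

Lemma V0_acyclic : ~~ has_directed_cycle (modified_rel K V0).
Proof.
apply: (@pot_acyc _ _ phi0) => x y /orP [/andP [h nV]| /V0P [s /andP [s0 xs] [-> ->]]].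
  move: h; rewrite /hasse_edge /= => /and4P [xK yK xy /eqP cy].
  have cyx : #|y :\ x0| = #|x :\ x0| + 1.
    have := cardsD1 x0 x; have := cardsD1 x0 y.
    case: (boolP (x0 \in x)) => xx.
      rewrite (subsetP (proper_sub xy) _ xx) cy /= => h1 h2.
      set a := #|y :\ x0| in h1 *; set b := #|x :\ x0| in h2 *; set c := #|x| in h1 h2; lia.
    case: (boolP (x0 \in y)) => xy0; last first.
      rewrite cy /= => h1 h2.
      set a := #|y :\ x0| in h1 *; set b := #|x :\ x0| in h2 *; set c := #|x| in h1 h2; lia.
    exfalso; move/negP: nV; apply; apply/V0P; exists x.
      by rewrite xx andbT; move: xK; rewrite inE.
    congr (_, _); apply/esym/eqP; rewrite eqEcard cardU1x // cy leqnn andbT.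
    by rewrite subUset sub1set xy0 (proper_sub xy).
  have := card_le y; rewrite /phi0 cyx cy => yle. set a := #|x :\ x0|. set b := #|x|. lia.
rewrite /phi0 (setU1K xs) (_ : s :\ x0 = s); last by apply/setP => z; rewrite !inE; case: eqP => // ->; rewrite (negbTE xs).
rewrite cardU1x //; have := card_le (x0 |: s); rewrite cardU1x // => le; set a := #|s|; lia.
Qed.

Lemma V0_crit : critical K V0 = [set [set x0]].
Proof.
apply/setP => s; rewrite in_set1; apply/critP/eqP => [[sK H]|->].
  case: (boolP (x0 \in s)) => xs; last first.
    have /H [] : (s, x0 |: s) \in V0.
      by apply/V0P; exists s => //; rewrite xs andbT; move: sK; rewrite inE.
    by rewrite /= eqxx.
  case: (eqVneq (s :\ x0) set0) => e.
    apply/eqP; rewrite eqEsubset sub1set xs andbT.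
    by apply/subsetP => z zs; rewrite in_set1; apply/negPn/negP => zx; move/setP: e => /(_ z); rewrite !inE zx zs.
  have /H [_] : (s :\ x0, s) \in V0.
    by apply/V0P; exists (s :\ x0); [rewrite e !inE eqxx | rewrite setD1K].
  by rewrite /= eqxx.
split; first by rewrite inE; apply/set0Pn; exists x0; rewrite in_set1.
move=> p /V0P [t /andP [t0 xt] ->]; split => /=; apply/eqP => e.
  by move: xt; rewrite e in_set1 eqxx.
case/set0Pn: t0 => z zt; have : z \in x0 |: t by rewrite setU1r.
by rewrite e in_set1 => /eqP zx; move: xt; rewrite -zx zt.
Qed.

Lemma V0_am : acyclic_matching K V0.
Proof. by rewrite /acyclic_matching V0_matching V0_acyclic. Qed.

Lemma V0_card : #|critical K V0| = 1.
Proof. by rewrite V0_crit cards1. Qed.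

Lemma critK_ge1 W : matching K W -> 0 < #|critical K W|.
Proof.
move=> M; have := crit_count M; have := crit_count V0_matching; rewrite V0_card => <-.
set a := #|critical K W|; set b := #|W|; set c := #|V0|; lia.
Qed.

Lemma optK_iff V : optimal K V = acyclic_matching K V && (#|critical K V| == 1).
Proof.
apply/andP/andP => [[am /forallP H]|[am /eqP c1]]; split => //.
  have := H V0; rewrite V0_am /= V0_card => le.
  by case/andP: am => M _; rewrite eqn_leq le critK_ge1.
by apply/forallP => W; apply/implyP => /andP [M _]; rewrite c1 critK_ge1.
Qed.


Definition cell (j k : T) : {set T} := ~: [set j; k].

Lemma card_cell j k : j != k -> #|cell j k| = n - 1.
Proof. by move=> jk; rewrite /cell cardsCs setCK cards2 jk cardT; lia. Qed.

Lemma cell_L j k : j != k -> cell j k \in L.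
Proof. by move=> jk; rewrite inL card_cell //; lia. Qed.

Lemma hasse_LK x y : hasse_edge L (x, y) -> hasse_edge K (x, y).
Proof. by rewrite /hasse_edge /= => /and4P [/LK -> /LK -> -> ->]. Qed.

Lemma hasse_KL x y : hasse_edge K (x, y) -> y \in L -> hasse_edge L (x, y).
Proof.
rewrite /hasse_edge /= => /and4P [xK yK xy /eqP c] yL; rewrite yL xy c eqxx andbT /=.
rewrite andbT; apply: inK_L => //; move: yL; rewrite inL c; set a := #|x|; lia.
Qed.

Lemma CL (W : {set {set T} * {set T}}) (R : {set T}) (j0 k0 : T) : acyclic_matching L W -> j0 \in R -> k0 \notin R ->
  exists j k, [/\ j \in R, k \notin R & cell j k \in critical L W].
Proof.
move=> /andP [M Hc] j0R k0R.
have [HE HS] := matchingE M.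
case: (boolP [exists j, exists k, (j \in R) && (k \notin R) && (cell j k \in critical L W)]).
  case/existsP => j /existsP [k /andP [/andP [jR kR] cc]]; by exists j, k.
move=> Hn; exfalso.
have neq j k : j \in R -> k \notin R -> j != k by move=> jR kR; apply/eqP => e; move: kR; rewrite -e jR.
set Z := [set c : {set T} | [exists j, exists k, (j \in R) && (k \notin R) && (c == cell j k)]].
have ZP c : reflect (exists j k, [/\ j \in R, k \notin R & c = cell j k]) (c \in Z).
  rewrite inE; apply: (iffP existsP) => [[j /existsP [k /andP [/andP [jR kR] /eqP e]]]|[j [k [jR kR e]]]].
    by exists j, k.
  by exists j; apply/existsP; exists k; rewrite jR kR e eqxx.
apply: (@no_chain_succ _ (modified_rel L W) Z Hc).
  by apply/set0Pn; exists (cell j0 k0); apply/ZP; exists j0, k0.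
move=> a /ZP [j [k [jR kR ->]]].
have jk := neq _ _ jR kR.
have aL := cell_L jk.
have nc : cell j k \notin critical L W.
  by apply/negP => cc; move/negP: Hn; apply; apply/existsP; exists j; apply/existsP; exists k; rewrite jR kR cc.
have [p pW [e|e]] := noncritP aL nc.
  exfalso; have := HE _ pW; rewrite /hasse_edge e => /and4P [_ p2L _ /eqP c2].
  move: p2L; rewrite inL c2 card_cell //; clear -hn; lia.
have := HE _ pW; rewrite /hasse_edge e => /and4P [xL _ xa /eqP ca].
have pe : p = (p.1, cell j k) by rewrite -e -surjective_pairing.
set x := p.1 in xL xa ca pe *; clearbody x.
rewrite card_cell // in ca.
have cx : #|x| = n - 2 by move: ca; move: (#|x|) => c; clear -hn; lia.
suff step : forall b, b \in Z -> x \subset b -> b != cell j k -> exists2 b', b' \in Z &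
     exists z, modified_rel L W (cell j k) z && connect (modified_rel L W) z b'.
  have cxc : #|~: x| = 3 by rewrite cardsCs setCK cx cardT; clear -hn; lia.
  have sub : [set j; k] \subset ~: x by rewrite -(setCK [set j; k]) setCS (proper_sub xa).
  have : #|~: x :\: [set j; k]| = 1 by rewrite cardsDS // cxc cards2 jk.
  move/eqP; rewrite -(eqn_add2l 0) => /eqP; rewrite add0n => c1.
  have : 0 < #|~: x :\: [set j; k]| by rewrite c1.
  rewrite card_gt0 => /set0Pn [l]; rewrite !inE negb_or => /andP [/andP [lj lk] lx].
  case: (boolP (l \in R)) => lR.
    apply: (step (cell l k)).
    - by apply/ZP; exists l, k.
    - by rewrite -setCS setCK subUset !sub1set (subsetP sub k (set22 j k)) andbT inE lx.
    - apply/negP => /eqP /(congr1 (@setC _)); rewrite !setCK => /setP /(_ l).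
      by rewrite !inE (negbTE lj) (negbTE lk) eqxx.
  apply: (step (cell j l)).
  - by apply/ZP; exists j, l.
  - by rewrite -setCS setCK subUset !sub1set (subsetP sub j (set21 j k)) /= inE lx.
  - apply/negP => /eqP /(congr1 (@setC _)); rewrite !setCK => /setP /(_ l).
    by rewrite !inE (negbTE lj) (negbTE lk) eqxx orbT.
move=> b bZ xb ba; exists b => //; exists x; apply/andP; split.
  by apply/orP; right; rewrite -pe.
apply: connect1; apply/orP; left.
have bL : b \in L by case/ZP: bZ => j' [k' [j'R k'R ->]]; apply: cell_L; apply: neq.
have cb : #|b| = n - 1 by case/ZP: bZ => j' [k' [j'R k'R ->]]; apply: card_cell; apply: neq.
apply/andP; split.
  rewrite /hasse_edge /= xL bL properEcard xb /= cb cx; clear -hn; apply/andP; split; lia.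
apply/negP => xbW; have := HS _ _ pW xbW; rewrite /share_vertex pe /= eqxx => /(_ isT) [] e2.
by move: ba; rewrite e2 eqxx.
Qed.

Lemma cellC j k : cell j k = cell k j. Proof. by rewrite /cell setUC. Qed.

Lemma notin_cell j k z : (z \notin cell j k) = (z == j) || (z == k).
Proof. by rewrite !inE negbK. Qed.

Definition build_inv (W : {set {set T} * {set T}}) (i : T) (m : nat)
  (R : {set T}) (C : {set {set T}}) (own : {set T} -> T) (mu : T -> nat) :=
  [/\ i \in R, #|R| = m.+1, #|C| = m & C \subset critical L W] /\
  [/\ {in C, forall c, exists k, [/\ k \in R, own c != k, c = cell (own c) k & mu k < mu (own c)]},
      {in C &, injective own},
      {in C, forall c, own c \in R /\ own c != i},
      mu i = 0 & {in R, forall r, mu r <= m}].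

Lemma build (W : {set {set T} * {set T}}) (i : T) m : acyclic_matching L W -> m <= n ->
  exists R C own mu, build_inv W i m R C own mu.
Proof.
move=> am; elim: m => [|m IH] hm.
  exists [set i], set0, (fun _ => i), (fun _ => 0); split; split => //.
  - by rewrite set11.
  - by rewrite cards1.
  - by rewrite cards0.
  - by rewrite sub0set.
  - by move=> c; rewrite inE.
  - by move=> c; rewrite inE.
  - by move=> c; rewrite inE.
have [R [C [own [mu [[iR cR cC sC] [Hc Hinj Hown mu0 mule]]]]]] := IH (ltnW hm).
have [k0 k0R] : exists k0, k0 \notin R.
  apply/existsP; rewrite -negb_forall; apply/negP => /forallP allR.
  have eR : R = [set: T] by apply/setP => z; rewrite inE allR.
  by move: cR hm; rewrite eR cardtop => <-; clear; lia.
have [j [k [jR kR cc]]] := CL am iR k0R.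
have jk : j != k by apply/eqP => e; move: kR; rewrite -e jR.
set c' := cell k j.
have c'C : c' \notin C.
  apply/negP => c'in; have [k' [k'R _ e _]] := Hc _ c'in; have [oR _] := Hown _ c'in.
  have : k \notin c' by rewrite notin_cell eqxx.
  by rewrite e notin_cell => /orP [] /eqP ek; move: kR; rewrite ek ?oR ?k'R.
have ik : (i == k) = false by apply/negbTE/eqP => e; move: kR; rewrite -e iR.
have ownR c : c \in C -> (own c == k) = false.
  by move=> cin; have [oR _] := Hown _ cin; apply/negbTE/eqP => e; move: kR; rewrite -e oR.
have cne c : c \in C -> (c == c') = false.
  by move=> cin; apply/negbTE/eqP => e; move: c'C; rewrite -e cin.
exists (k |: R), (c' |: C), (fun z => if z == c' then k else own z),
  (fun x => if x == k then m.+1 else mu x); split; split.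
- by rewrite setU1r.
- by rewrite cardsU1 kR cR.
- by rewrite cardsU1 c'C cC.
- by rewrite subUset sub1set /c' -cellC cc sC.
- move=> c; rewrite in_setU1 => /orP [/eqP -> | cin].
    rewrite eqxx; exists j; split; rewrite ?setU1r // 1?eq_sym //.
    rewrite eq_sym (negbTE jk) eqxx; have := mule j jR; clear; lia.
  rewrite cne //; have [k' [k'R ok' e mk']] := Hc _ cin.
  exists k'; split; rewrite ?setU1r // ownR //.
  by have -> : (k' == k) = false by apply/negbTE/eqP => e'; move: kR; rewrite -e' k'R.
- move=> c1 c2; rewrite !in_setU1 => /orP [/eqP -> | h1] /orP [/eqP -> | h2] //=.
  + by rewrite eqxx cne // => e; move: kR; have [oR _] := Hown _ h2; rewrite e oR.
  + by rewrite eqxx cne // => e; move: kR; have [oR _] := Hown _ h1; rewrite -e oR.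
  + by rewrite !cne //; apply: Hinj.
- move=> c; rewrite in_setU1 => /orP [/eqP -> | cin].
    by rewrite eqxx setU11; split => //; rewrite eq_sym ik.
  by rewrite cne //; have [oR oi] := Hown _ cin; rewrite setU1r.
- by rewrite ik.
- move=> r; rewrite in_setU1 => /orP [/eqP -> | rR]; first by rewrite eqxx.
  by case: (r == k) => //; have := mule r rR; clear; lia.
Qed.

Lemma inL' (s : {set T}) : (s \in L) = (0 < #|s|) && (#|s| <= n - 1).
Proof. exact: inL. Qed.

Lemma critL_ge W : acyclic_matching L W -> n.+1 <= #|critical L W|.
Proof.
move=> am.
have [R [C [own [mu [[iR cR cC sC] [Hc Hinj Hown mu0 mule]]]]]] := build x0 am (leqnn n).
have h1 : 1 < n - 1 by clear -hn; lia.
have [v v1 vc] := vertex_crit x0 inL' h1 am.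
have vC : v \notin C.
  apply/negP => /Hc [k [_ ok e _]]; move: v1; rewrite e card_cell // => h; clear -hn h; lia.
have : v |: C \subset critical L W by rewrite subUset sub1set vc sC.
by move/subset_leq_card; rewrite cardsU1 vC cC.
Qed.

Lemma restrictE (X : {set {set T}}) (V : {set {set T} * {set T}}) p :
  (p \in restrict X V) = [&& p \in V, p.1 \in X & p.2 \in X].
Proof. by rewrite /restrict in_set. Qed.

Lemma restrict_am V : acyclic_matching K V -> acyclic_matching L (restrict L V).
Proof.
case/andP => M Hc; have [HE HS] := matchingE M; apply/andP; split.
  apply/andP; split.
    apply/forallP => p; apply/implyP; rewrite restrictE => /and3P [pV p1 p2].
    by case: p pV p1 p2 => x y pV p1 p2; apply: hasse_KL => //; apply: HE.
  apply/forallP => p; apply/implyP; rewrite restrictE => /and3P [pV _ _].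
  apply/forallP => q; apply/implyP; rewrite restrictE => /and3P [qV _ _].
  by apply/implyP => ne; apply/negP => sh; move: ne; rewrite (HS _ _ pV qV sh) eqxx.
apply: (@pot_acyc _ _ (anc (modified_rel K V))) => x y h; apply: acyc_pot => //.
case/orP: h => [/andP [hl nr] | ].
  apply/orP; left; rewrite hasse_LK //=; apply/negP => xyV; move/negP: nr; apply.
  by move: hl; rewrite /hasse_edge /= restrictE xyV => /and4P [-> -> _ _].
by rewrite restrictE => /and3P [yxV _ _]; apply/orP; right.
Qed.

Lemma optK_noncrit V z : optimal K V -> z \in K -> #|z| != 1 -> z \notin critical K V.
Proof.
rewrite optK_iff => /andP [am /eqP c1] zK z1.
have h1 : 1 < n.+1 by clear -hn; lia.
have [v v1 vc] := vertex_crit x0 inK h1 am.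
have /cards1P [w ew] : #|critical K V| == 1 by rewrite c1.
apply/negP; rewrite ew in_set1 => /eqP zw; move: vc; rewrite ew in_set1 => /eqP vw.
by move: z1; rewrite zw -vw v1.
Qed.

Lemma rootP V : optimal K V -> exists i, (Fc i, top) \in V.
Proof.
move=> opt; have t1 : #|top| != 1 by rewrite cardtop; clear -hn; apply/eqP; lia.
have := optK_noncrit opt topK t1.
case/andP: opt => /andP [M _] _; have [HE _] := matchingE M.
move/(noncritP topK) => [p pV [e|e]].
  have := HE _ pV; rewrite /hasse_edge e => /and4P [_ _ _ /eqP c].
  by have := card_le p.2; rewrite c cardtop ltnn.
have := HE _ pV; rewrite /hasse_edge e cardtop => /and4P [_ _ _ /eqP c].
have c1 : #|p.1| = n by move: c; move: (#|p.1|) => k [->].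
have [i ei] := facetP c1.
by exists i; rewrite -e -ei -surjective_pairing.
Qed.

Lemma cardKminusL : #|K :\: L| = n.+2.
Proof.
rewrite KminusL cardsU1 card_imset; last exact: Fc_inj.
rewrite cardT; have -> : top \notin [set Fc j | j in T] => //.
apply/imsetP => [[j _ e]]; have := cardF j; rewrite -e cardtop; clear; lia.
Qed.

Lemma in_L_of_p2 (p : {set T} * {set T}) : hasse_edge K p -> p.2 \in L -> p.1 \in L.
Proof.
case: p => x y /=; rewrite /hasse_edge /= => /and4P [xK _ _ /eqP c] yL.
apply: inK_L => //; move: yL; rewrite inL c => /andP [_ h]; move: h; move: (#|x|) => a; clear; lia.
Qed.

Lemma restrict_card V i : optimal K V -> (Fc i, top) \in V ->
  #|V| <= #|restrict L V| + n.+1.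
Proof.
move=> opt iV; case/andP: opt => /andP [M _] _; have [HE HS] := matchingE M.
have sub : restrict L V \subset V by apply/subsetP => p; rewrite restrictE => /andP [].
have e1 := cardsID (restrict L V) V.
rewrite (setIidPr sub) in e1.
suff : #|V :\: restrict L V| <= n.+1 by move: e1; move: (#|V :\: restrict L V|) => a <-; clear; lia.
rewrite -(@card_in_imset _ _ (fun p => p.2)); last first.
  by move=> p q; rewrite !inE => /andP [_ pV] /andP [_ qV]; apply: match22 M pV qV.
have : #|(K :\: L) :\ Fc i| = n.+1.
  have := cardsD1 (Fc i) (K :\: L); rewrite cardKminusL in_setD FnL FK /=.
  by move: (#|_ :\ Fc i|) => a; clear; lia.
move=> cD; apply: (leq_trans _ (eq_leq cD)); apply: subset_leq_card; apply/subsetP => z /imsetP [p].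
rewrite in_setD => /andP [pr pV] ->.
have := HE _ pV; rewrite /hasse_edge => /and4P [_ p2K _ _].
rewrite in_setD1 in_setD p2K andbT; apply/andP; split.
  by apply/eqP => e; apply: (match12 M iV pV).
apply/negP => p2L; move/negP: pr; apply; rewrite restrictE pV p2L andbT /=.
exact: in_L_of_p2 (HE _ pV) p2L.
Qed.

Lemma crit_restrict V : optimal K V -> #|critical L (restrict L V)| = n.+1.
Proof.
move=> opt; have [i iV] := rootP opt.
have le := restrict_card opt iV.
have am := restrict_am (proj1 (andP opt)).
have ge := critL_ge am.
have c1 : #|critical K V| = 1 by move: opt; rewrite optK_iff => /andP [_ /eqP].
have h1 := crit_count (proj1 (andP (proj1 (andP opt)))).
have h2 := crit_count (proj1 (andP am)).
rewrite c1 cardKL in h1.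
move: le ge h1 h2; move: (#|V|) (#|restrict L V|) (#|critical L (restrict L V)|) (#|L|) => a b c d.
clear; lia.
Qed.

Lemma optL_iff W : optimal L W = acyclic_matching L W && (#|critical L W| == n.+1).
Proof.
apply/andP/andP => [[am /forallP H]|[am /eqP c1]]; split => //.
  have V0opt : optimal K V0 by rewrite optK_iff V0_am V0_card.
  have := H (restrict L V0); rewrite restrict_am ?V0_am //= crit_restrict // => le.
  by rewrite eqn_leq le critL_ge.
by apply/forallP => W'; apply/implyP => am'; rewrite c1 critL_ge.
Qed.

Lemma part1 V : optimal K V -> optimal L (restrict L V).
Proof.
move=> opt; rewrite optL_iff restrict_am ?crit_restrict ?eqxx //.
by case/andP: opt.
Qed.

Section Ext.
Variables (W : {set {set T} * {set T}}) (i : T) (C : {set {set T}})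
  (own : {set T} -> T) (mu : T -> nat).
Hypothesis Wopt : optimal L W.
Hypothesis cC : #|C| = n.
Hypothesis sC : C \subset critical L W.
Hypothesis Hc : {in C, forall c, exists k, [/\ own c != k, c = cell (own c) k & mu k < mu (own c)]}.
Hypothesis Hinj : {in C &, injective own}.
Hypothesis Hown : {in C, forall c, own c != i}.
Hypothesis mu0 : mu i = 0.
Hypothesis mule : forall r, mu r <= n.

Definition NN := [set (c, Fc (own c)) | c in C].
Definition VV := W :|: ((Fc i, top) |: NN).

Lemma Wam : acyclic_matching L W. Proof. by move: Wopt; rewrite optL_iff => /andP []. Qed.
Lemma Wcrit : #|critical L W| = n.+1. Proof. by move: Wopt; rewrite optL_iff => /andP [_ /eqP]. Qed.
Lemma WM : matching L W. Proof. by case/andP: Wam. Qed.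

Lemma NNP p : reflect (exists2 c, c \in C & p = (c, Fc (own c))) (p \in NN).
Proof. exact: imsetP. Qed.

Lemma C_crit c : c \in C -> c \in critical L W. Proof. by move/(subsetP sC). Qed.
Lemma C_L c : c \in C -> c \in L. Proof. by move/C_crit/critP => []. Qed.
Lemma C_card c : c \in C -> #|c| = n - 1.
Proof. by move=> cin; have [k [ok -> _]] := Hc cin; apply: card_cell. Qed.
Lemma C_notW c p : c \in C -> p \in W -> p.1 != c /\ p.2 != c.
Proof. by move=> /C_crit /critP [_ H] /H. Qed.
Lemma C_sub c : c \in C -> c \subset Fc (own c).
Proof.
move=> cin; have [k [ok e _]] := Hc cin; apply/subsetP => z; rewrite {1}e /Fc !inE negb_or.
by case/andP.
Qed.
Lemma C_ntop c : c \in C -> c != top.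
Proof. by move=> cin; apply/eqP => e; have := C_card cin; rewrite e cardtop; clear -hn; lia. Qed.
Lemma C_nfacet c : c \in C -> #|c| != n.
Proof. by move=> cin; rewrite C_card //; clear -hn; apply/eqP; lia. Qed.
Lemma W_L p : p \in W -> p.1 \in L /\ p.2 \in L.
Proof. by have [HE _] := matchingE WM => /HE; rewrite /hasse_edge => /and4P []. Qed.

Lemma VV_cases p : p \in VV ->
  [\/ p \in W, p = (Fc i, top) | exists2 c, c \in C & p = (c, Fc (own c))].
Proof.
rewrite /VV in_setU in_setU1 => /orP [pW | /orP [/eqP -> | /NNP h]].
- by constructor 1.
- by constructor 2.
- by constructor 3.
Qed.

Lemma FnC j c : c \in C -> Fc j != c.
Proof. by move=> cin; apply/eqP => e; move: (C_nfacet cin); rewrite -e cardF eqxx. Qed.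

Lemma share_sym (p q : {set T} * {set T}) : share_vertex p q = share_vertex q p.
Proof.
rewrite /share_vertex; rewrite (eq_sym p.1 q.1) (eq_sym p.2 q.2) (eq_sym p.1 q.2) (eq_sym p.2 q.1).
by case: (q.1 == p.1); case: (q.2 == p.2); case: (q.2 == p.1); case: (q.1 == p.2).
Qed.

Lemma sv_neq (p q : {set T} * {set T}) :
  p.1 != q.1 -> p.1 != q.2 -> p.2 != q.1 -> p.2 != q.2 -> ~~ share_vertex p q.
Proof. by rewrite /share_vertex => /negbTE -> /negbTE -> /negbTE -> /negbTE ->. Qed.

Lemma neqL (x y : {set T}) : x \in L -> y \notin L -> x != y.
Proof. by move=> xL yL; apply/eqP => e; move: yL; rewrite -e xL. Qed.

Lemma Fnt j : Fc j != top.
Proof. by apply/eqP => e; have := cardF j; rewrite e cardtop; clear; lia. Qed.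

Lemma nsv_W_top p : p \in W -> ~~ share_vertex p (Fc i, top).
Proof.
move=> pW; have [p1 p2] := W_L pW.
by apply: sv_neq; rewrite /= neqL ?FnL ?topnL.
Qed.

Lemma nsv_W_N p d : p \in W -> d \in C -> ~~ share_vertex p (d, Fc (own d)).
Proof.
move=> pW din; have [p1 p2] := W_L pW; have [n1 n2] := C_notW din pW.
by apply: sv_neq; rewrite /= ?n1 ?n2 // neqL ?FnL.
Qed.

Lemma nsv_top_N d : d \in C -> ~~ share_vertex (Fc i, top) (d, Fc (own d)).
Proof.
move=> din; apply: sv_neq => /=.
- exact: FnC.
- by apply/eqP => /Fc_inj e; move: (Hown din); rewrite e eqxx.
- by rewrite eq_sym C_ntop.
- by rewrite eq_sym Fnt.
Qed.

Lemma VV_share p q : p \in VV -> q \in VV -> share_vertex p q -> p = q.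
Proof.
have [HE HS] := matchingE WM.
move=> + + sh; move=> /VV_cases [pW | pe | [c cin pe]] /VV_cases [qW | qe | [d din qe]].
- exact: HS.
- by move: sh; rewrite qe (negbTE (nsv_W_top pW)).
- by move: sh; rewrite qe (negbTE (nsv_W_N pW din)).
- by move: sh; rewrite pe share_sym (negbTE (nsv_W_top qW)).
- by rewrite pe qe.
- by move: sh; rewrite pe qe (negbTE (nsv_top_N din)).
- by move: sh; rewrite pe share_sym (negbTE (nsv_W_N qW cin)).
- by move: sh; rewrite qe pe share_sym (negbTE (nsv_top_N cin)).
move: sh; rewrite pe qe /share_vertex /= => /or4P [] /eqP e.
- by rewrite e.
- by move: (FnC (own d) cin); rewrite e eqxx.
- by move: (FnC (own c) din); rewrite e eqxx.
- by move/Fc_inj: e => /(Hinj cin din) ->.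
Qed.

Lemma VV_matching : matching K VV.
Proof.
have [HE HS] := matchingE WM.
apply/andP; split.
  apply/forallP => p; apply/implyP => /VV_cases [pW | -> | [c cin ->]].
  - by rewrite [p]surjective_pairing; apply: hasse_LK; rewrite -surjective_pairing; apply: HE.
  - rewrite /hasse_edge /= FK topK properEcard subsetT cardF cardtop ltnSn /=; exact: eqxx.
  - rewrite /hasse_edge /= FK (LK (C_L cin)) properEcard C_sub // cardF C_card //=.
    by clear -hn; apply/andP; split; [lia| apply/eqP; lia].
apply/forallP => p; apply/implyP => pV; apply/forallP => q; apply/implyP => qV.
apply/implyP => ne; apply/negP => sh; move: ne; rewrite (VV_share pV qV sh) eqxx.
done.
Qed.

Lemma VV_restrict : restrict L VV = W.
Proof.
apply/setP => p; rewrite restrictE; apply/idP/idP.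
  case/and3P => /VV_cases [pW | -> | [c cin ->]] //= _.
    by rewrite (negbTE topnL).
  by rewrite (negbTE (FnL _)).
move=> pW; have [p1 p2] := W_L pW; by rewrite p1 p2 /VV in_setU pW.
Qed.

Lemma VV_root : (Fc i, top) \in VV.
Proof. by rewrite /VV in_setU in_setU1 eqxx orbT. Qed.

Lemma VV_card : #|VV| = #|W| + n.+1.
Proof.
have cN : #|NN| = n.
  rewrite /NN card_in_imset ?cC // => c d _ _ [] //.
have tN : (Fc i, top) \notin NN.
  by apply/NNP => [[c cin [e _]]]; move: (FnC i cin); rewrite e eqxx.
have dis : W :&: ((Fc i, top) |: NN) = set0.
  apply/setP => p; rewrite !inE; apply/negbTE; apply/negP => /andP [pW /orP [/eqP e | /NNP [c cin e]]].
    by have [_ p2] := W_L pW; move: p2; rewrite e /= (negbTE topnL).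
  by have [_ p2] := W_L pW; move: p2; rewrite e /= (negbTE (FnL _)).
have := cardsUI W ((Fc i, top) |: NN); rewrite dis cards0 cardsU1 tN cN addn0 => <-.
by rewrite /VV.
Qed.

Lemma VV_crit : #|critical K VV| = 1.
Proof.
have h1 := crit_count VV_matching; have h2 := crit_count WM.
rewrite VV_card cardKL in h1; rewrite Wcrit in h2.
move: h1 h2; move: (#|critical K VV|) (#|W|) (#|L|) => a b c; clear; lia.
Qed.

Lemma own_surj j : j != i -> exists2 c, c \in C & own c = j.
Proof.
move=> ji.
have s1 : own @: C \subset [set: T] :\ i.
  by apply/subsetP => z /imsetP [c cin ->]; rewrite in_setD1 (Hown cin) in_setT.
have c1 : #|own @: C| = n by rewrite card_in_imset.
have c2 : #|[set: T] :\ i| = n.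
  have := cardsD1 i [set: T]; rewrite cardtop inE /= => h; move: h; move: (#|_ :\ i|) => a; clear; lia.
have e : own @: C = [set: T] :\ i by apply/eqP; rewrite eqEcard s1 c1 c2 leqnn.
have : j \in own @: C by rewrite e in_setD1 ji in_setT.
by case/imsetP => c cin ->; exists c.
Qed.

Lemma mu_pos j : j != i -> 0 < mu j.
Proof.
move/own_surj => [c cin <-]; have [k [_ _ h]] := Hc cin; move: h; clear; lia.
Qed.

Definition miss (z : {set T}) : T := odflt i [pick j | j \notin z].
Lemma missF j : miss (Fc j) = j.
Proof.
rewrite /miss; case: pickP => [j' /= | H] /=; first by rewrite notinF => /eqP.
by have := H j; rewrite /= notinF eqxx.
Qed.

Definition big := #|{set T}|.+1.
Definition Phi (z : {set T}) : nat :=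
  if z == top then big + 3 * n.+1 - 1
  else if #|z| == n then big + 3 * (n.+1 - mu (miss z))
  else if z \in C then big + 3 * (n.+1 - mu (own z)) + 1
  else anc (modified_rel L W) z.

Lemma PhiF j : Phi (Fc j) = big + 3 * (n.+1 - mu j).
Proof. by rewrite /Phi (negbTE (Fnt j)) cardF eqxx missF. Qed.
Lemma PhiT : Phi top = big + 3 * n.+1 - 1.
Proof. by rewrite /Phi eqxx. Qed.
Lemma PhiC c : c \in C -> Phi c = big + 3 * (n.+1 - mu (own c)) + 1.
Proof. by move=> cin; rewrite /Phi (negbTE (C_ntop cin)) (negbTE (C_nfacet cin)) cin. Qed.

Lemma anc_le z : anc (modified_rel L W) z < big.
Proof. by rewrite /anc /big ltnS max_card. Qed.

Lemma VV_acyclic : ~~ has_directed_cycle (modified_rel K VV).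
Proof.
have [HE HS] := matchingE WM.
have [VE _] := matchingE VV_matching.
apply: (@pot_acyc _ _ Phi) => x y exy.
have NNV c : c \in C -> (c, Fc (own c)) \in VV.
  by move=> cin; rewrite /VV in_setU in_setU1; apply/orP; right; apply/orP; right; apply/NNP; exists c.
case: (eqVneq x top) => [xt | xnt].
  subst x; case/orP: exy => [/andP [h _] | /VV_cases [yW | ye | [c cin ye]]].
  - move: h; rewrite /hasse_edge /= cardtop => /and4P [_ yK _ /eqP c].
    by have := card_le y; rewrite c ltnn.
  - by have [_] := W_L yW; rewrite /= (negbTE topnL).
  - by case: ye => ->; rewrite PhiF PhiT mu0; clear; lia.
  - by case: ye => _ e; move: (Fnt (own c)); rewrite e eqxx.
case: (eqVneq #|x| n) => [xn | xnn].
  have [j xj] := facetP xn; subst x.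
  case/orP: exy => [/andP [h nV] | /VV_cases [yW | ye | [c cin ye]]].
  - move: h; rewrite /hasse_edge /= cardF => /and4P [_ yK _ /eqP c].
    have yt := topP c; subst y.
    have ji : j != i by apply/eqP => ji; move: nV; rewrite ji VV_root.
    have := mu_pos ji; have := mule j; rewrite PhiF PhiT; clear; lia.
  - by have [_] := W_L yW; rewrite /= (negbTE (FnL _)).
  - by case: ye => _ e; move: (Fnt j); rewrite -e eqxx.
  - case: ye => yc e; subst y; rewrite (PhiC cin) PhiF; move/Fc_inj: e => ->; clear; lia.
case: (boolP (x \in C)) => xC.
  case/orP: exy => [/andP [h nV] | /VV_cases [yW | ye | [c cin ye]]].
  - move: h; rewrite /hasse_edge /= (C_card xC) => /and4P [_ yK xy /eqP c].
    have cy : #|y| = n by rewrite c; clear -hn; lia.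
    have [k yk] := facetP cy; subst y.
    have ko : k != own x by apply/eqP => e; move: nV; rewrite e NNV.
    have [k' [ok' ex mk']] := Hc xC.
    have kx : k \notin x.
      by apply/negP => kin; have := subsetP (proper_sub xy) _ kin; rewrite /Fc !inE eqxx.
    move: kx; rewrite {1}ex notin_cell (negbTE ko) /= => /eqP kk'; subst k'.
    rewrite (PhiC xC) PhiF; have := mule (own x); move: mk'; clear; lia.
  - by have [_ h] := C_notW xC yW; rewrite /= eqxx in h.
  - by case: ye => _ e; move: (C_ntop xC); rewrite e eqxx.
  - by case: ye => _ e; move: (FnC (own c) xC); rewrite e eqxx.
have Phix : Phi x = anc (modified_rel L W) x.
  by rewrite /Phi (negbTE xnt) (negbTE xnn) (negbTE xC).
rewrite Phix.
case: (eqVneq y top) => [-> | ynt].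
  by rewrite PhiT; have := anc_le x; clear; lia.
case: (eqVneq #|y| n) => [yn | ynn].
  have [j ->] := facetP yn; rewrite PhiF; have := anc_le x; clear; lia.
case: (boolP (y \in C)) => yC.
  rewrite (PhiC yC); have := anc_le x; clear; lia.
have Phiy : Phi y = anc (modified_rel L W) y.
  by rewrite /Phi (negbTE ynt) (negbTE ynn) (negbTE yC).
rewrite Phiy; apply: acyc_pot; first by case/andP: Wam.
case/orP: exy => [/andP [h nV] | /VV_cases [yW | ye | [c cin ye]]].
- have yL : y \in L.
    move: h; rewrite /hasse_edge /= => /and4P [_ yK _ _]; apply: inK_L => //.
    have := card_le y; have : #|y| != n.+1 by apply/eqP => /topP e; move: ynt; rewrite e eqxx.
    move: ynn; move: (#|y|) => a; clear; move=> /eqP h1 /eqP h2 h3; lia.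
  apply/orP; left; rewrite hasse_KL //=; apply/negP => xyW; move: nV.
  by rewrite /VV in_setU xyW.
- by apply/orP; right.
- by case: ye => _ e; move: xnt; rewrite e eqxx.
- by case: ye => _ e; move: xnn; rewrite e cardF eqxx.
Qed.

Lemma VV_opt : optimal K VV.
Proof. by rewrite optK_iff /acyclic_matching VV_matching VV_acyclic VV_crit. Qed.

End Ext.

Lemma p2_notL_cases (V : {set {set T} * {set T}}) p : matching K V -> p \in V -> p.2 \notin L ->
  p.2 = top \/ exists j, p.2 = Fc j /\ #|p.1| = n - 1.
Proof.
move=> M pV p2L; have [HE _] := matchingE M.
have := HE _ pV; rewrite /hasse_edge => /and4P [p1K p2K _ /eqP c].
have : p.2 \in K :\: L by rewrite in_setD p2L p2K.
rewrite KminusL in_setU1 => /orP [/eqP -> | /imsetP [j _ e]]; first by left.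
right; exists j; split => //; move: c; rewrite e cardF => /(congr1 predn) /= <-; by rewrite subn1.
Qed.

Section Uniq.
Variables (V V' : {set {set T} * {set T}}) (i : T).
Hypotheses (oV : optimal K V) (oV' : optimal K V').
Hypothesis rVV : restrict L V = restrict L V'.
Hypotheses (iV : (Fc i, top) \in V) (iV' : (Fc i, top) \in V').

Lemma MV : matching K V. Proof. by case/andP: oV => /andP []. Qed.
Lemma MV' : matching K V'. Proof. by case/andP: oV' => /andP []. Qed.

Definition DD := [set j : T | [exists c : {set T}, ((c, Fc j) \in V) && ((c, Fc j) \notin V')]].

Lemma DD_step j : j \in DD -> exists2 k, k \in DD &
  exists z, modified_rel K V (Fc j) z && connect (modified_rel K V) z (Fc k).
Proof.
have [HE HS] := matchingE MV; have [HE' HS'] := matchingE MV'.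
rewrite inE => /existsP [c /andP [cV cV']].
have := HE _ cV; rewrite /hasse_edge /= cardF => /and4P [cK _ _ /eqP cc].
have cn : #|c| = n - 1 by move: cc => /(congr1 predn) /= <-; rewrite subn1.
have cL : c \in L by apply: inK_L => //; rewrite cn.
have c1 : #|c| != 1 by rewrite cn; clear -hn; apply/eqP; lia.
have := optK_noncrit oV' cK c1; case/(noncritP cK) => q qV' [e|e]; last first.
  exfalso; have q1L := in_L_of_p2 (HE' _ qV') (_ : q.2 \in L); rewrite e in q1L.
  have : q \in restrict L V by rewrite rVV restrictE qV' e cL q1L.
  by rewrite restrictE => /and3P [qV _ _]; apply: (match12 MV cV qV); rewrite e.
have q2L : q.2 \notin L.
  apply/negP => q2L; have : q \in restrict L V by rewrite rVV restrictE qV' q2L e cL.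
  rewrite restrictE => /and3P [qV _ _]; have := match11 MV cV qV; rewrite e => /(_ erefl) qe.
  by move: q2L; rewrite -qe /= (negbTE (FnL j)).
have [q2t | [k [qk _]]] := p2_notL_cases MV' qV' q2L.
  exfalso; have := HE' _ qV'; rewrite /hasse_edge q2t cardtop e cn => /and4P [_ _ _ /eqP h].
  by move: h; clear -hn; lia.
have qe : q = (c, Fc k) by rewrite [q]surjective_pairing e qk.
have kj : k != j by apply/eqP => kj; move: cV'; rewrite -kj -qe qV'.
have ckV : (c, Fc k) \notin V.
  by apply/negP => ckV; have := match11 MV cV ckV erefl => -[] /Fc_inj /eqP; rewrite eq_sym (negbTE kj).
have Fk1 : #|Fc k| != 1 by rewrite cardF; clear -hn; apply/eqP; lia.
have := optK_noncrit oV (FK k) Fk1; case/(noncritP (FK k)) => r rV [e2|e2].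
  exfalso; have := HE _ rV; rewrite /hasse_edge e2 cardF => /and4P [_ _ _ /eqP h].
  have := topP h => r2t; have ri := match22 MV rV iV r2t.
  have ki : Fc k = Fc i by rewrite -e2 ri.
  by apply: (match12 MV' iV' qV'); rewrite qe /= ki.
exists k.
  rewrite inE; apply/existsP; exists r.1; rewrite -e2 -surjective_pairing rV /=.
  apply/negP => rV'; have := match22 MV' rV' qV'; rewrite e2 qk => /(_ erefl) rq.
  by move: ckV; rewrite -qe -rq rV.
exists c; apply/andP; split; first by apply/orP; right.
apply: connect1; apply/orP; left; rewrite ckV andbT.
by have := HE' _ qV'; rewrite qe.
Qed.

Lemma DD_empty : DD = set0.
Proof.
apply/eqP; apply/negPn/negP => ne.
apply: (@no_chain_succ _ (modified_rel K V) (Fc @: DD)).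
- by case/andP: oV => /andP [].
- by case/set0Pn: ne => j jD; apply/set0Pn; exists (Fc j); apply/imsetP; exists j.
move=> a /imsetP [j jD ->]; have [k kD h] := DD_step jD.
by exists (Fc k) => //; apply/imsetP; exists k.
Qed.

Lemma VsubV' : V \subset V'.
Proof.
have [HE HS] := matchingE MV.
apply/subsetP => p pV.
case: (boolP (p.2 \in L)) => p2L.
  have : p \in restrict L V by rewrite restrictE pV p2L (in_L_of_p2 (HE _ pV) p2L).
  by rewrite rVV restrictE => /and3P [].
have [p2t | [j [pj _]]] := p2_notL_cases MV pV p2L.
  by rewrite (match22 MV pV iV p2t).
apply/negPn/negP => pV'.
have : j \in DD.
  by rewrite inE; apply/existsP; exists p.1; rewrite -pj -surjective_pairing pV pV'.
by rewrite DD_empty inE.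
Qed.

End Uniq.

Lemma uniq_root (V V' : {set {set T} * {set T}}) i : optimal K V -> optimal K V' ->
  restrict L V = restrict L V' -> (Fc i, top) \in V -> (Fc i, top) \in V' -> V = V'.
Proof.
move=> oV oV' r iV iV'; apply/eqP; rewrite eqEsubset (VsubV' oV oV' r iV iV').
exact: (VsubV' oV' oV (esym r) iV' iV).
Qed.

Lemma ext_exists W i : optimal L W ->
  exists V, [/\ optimal K V, restrict L V = W & (Fc i, top) \in V].
Proof.
move=> Wopt; have am : acyclic_matching L W by move: Wopt; rewrite optL_iff => /andP [].
have [R [C [own [mu [[iR cR cC sC] [Hc Hinj Hown mu0 mule]]]]]] := build i am (leqnn n).
have RT : R = [set: T] by apply/eqP; rewrite eqEcard subsetT cardtop cR leqnn.
have Hc' : {in C, forall c, exists k, [/\ own c != k, c = cell (own c) k & mu k < mu (own c)]}.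
  by move=> c cin; have [k [_ a b d]] := Hc c cin; exists k.
have Hown' : {in C, forall c, own c != i} by move=> c cin; have [] := Hown c cin.
have mule' : forall r, mu r <= n by move=> r; apply: mule; rewrite RT in_setT.
exists (VV W i C own); split.
- exact: VV_opt Wopt cC sC Hc' Hinj Hown' mu0 mule'.
- exact: VV_restrict Wopt.
- exact: VV_root.
Qed.

Definition gr (V : {set {set T} * {set T}}) : T := odflt x0 [pick j | (Fc j, top) \in V].

Lemma grP V : optimal K V -> (Fc (gr V), top) \in V.
Proof.
move=> opt; rewrite /gr; case: pickP => [j /= -> // | H].
by have [j jV] := rootP opt; have := H j; rewrite jV.
Qed.

Lemma gr_eq V j : optimal K V -> (Fc j, top) \in V -> gr V = j.
Proof.
move=> opt jV; have := match22 (proj1 (andP (proj1 (andP opt)))) (grP opt) jV erefl.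
by case => /Fc_inj.
Qed.

Lemma fiber_card W : optimal L W ->
  #|[set V | optimal K V && (restrict L V == W)]| = n.+1.
Proof.
move=> Wopt; set A := [set V | _].
rewrite -(@card_in_imset _ _ gr); last first.
  move=> V V'; rewrite !inE => /andP [oV /eqP rV] /andP [oV' /eqP rV'] e.
  apply: (uniq_root (i := gr V) oV oV'); first by rewrite rV rV'.
    exact: grP.
  by rewrite e; apply: grP.
have -> : gr @: A = [set: T].
  apply/eqP; rewrite eqEsubset subsetT /=; apply/subsetP => i _.
  have [V [oV rV iV]] := ext_exists i Wopt.
  by apply/imsetP; exists V; [rewrite inE oV rV eqxx | rewrite (gr_eq oV iV)].
by rewrite cardtop.
Qed.

Definition W0 := restrict L V0.
Lemma V0opt : optimal K V0. Proof. by rewrite optK_iff V0_am V0_card. Qed.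
Lemma W0am : acyclic_matching L W0. Proof. exact: restrict_am V0_am. Qed.
Lemma W0crit : #|critical L W0| = n.+1. Proof. exact: crit_restrict V0opt. Qed.
Lemma W0ne : W0 != set0.
Proof.
have x1 : (ord_max : T) != x0 by rewrite /x0; apply/eqP => /(congr1 val) /=; clear -hn; lia.
apply/set0Pn; exists ([set ord_max], x0 |: [set ord_max]).
rewrite /W0 restrictE /=; apply/and3P; split.
- apply/V0P; exists [set ord_max] => //; rewrite in_set1 (eq_sym x0) x1 andbT.
  by apply/set0Pn; exists ord_max; rewrite in_set1.
- by rewrite inL cards1; clear -hn; lia.
- rewrite inL cardsU1 in_set1 (eq_sym x0) x1 cards1 /=; clear -hn; lia.
Qed.

Lemma critL_formula W : matching L W -> #|critical L W| + #|W| + #|W| = #|L|.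
Proof. exact: crit_count. Qed.

Lemma Mtop_iff W : M_top_simplex L W = optimal L W.
Proof.
have h0 := critL_formula (proj1 (andP W0am)); rewrite W0crit in h0.
apply/and3P/idP => [[am ne /forallP H] | opt].
  have := H W0; rewrite W0am W0ne /= => le.
  rewrite optL_iff am eqn_leq critL_ge // andbT.
  have h1 := critL_formula (proj1 (andP am)).
  move: h0 h1 le; move: (#|critical L W|) (#|W|) (#|W0|) (#|L|) => a b c d; clear; lia.
have am : acyclic_matching L W by move: opt; rewrite optL_iff => /andP [].
have cW : #|critical L W| = n.+1 by move: opt; rewrite optL_iff => /andP [_ /eqP].
have h1 := critL_formula (proj1 (andP am)); rewrite cW in h1.
split => //.
  rewrite -card_gt0; have : 0 < #|W0| by rewrite card_gt0 W0ne.
  by move: h0 h1; move: (#|W|) (#|W0|) (#|L|) => a b c; clear; lia.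
apply/forallP => W'; apply/implyP => /andP [am' _].
have h2 := critL_formula (proj1 (andP am')); have := critL_ge am'.
by move: h1 h2; move: (#|critical L W'|) (#|W|) (#|W'|) (#|L|) => a b c d; clear; lia.
Qed.

Lemma f_formula : f n = n.+1 * #|[set W : {set {set T} * {set T}} | M_top_simplex L W]|.
Proof.
rewrite /f -sum1_card (partition_big (restrict L) (fun W => optimal L W)); last first.
  by move=> V; rewrite inE; apply: part1.
rewrite (eq_bigr (fun _ => n.+1)); last first.
  move=> W Wopt; apply: etrans (fiber_card Wopt); rewrite -sum1_card; apply: eq_bigl => V.
  by rewrite !inE.
rewrite sum_nat_const mulnC; congr (_ * _); apply: eq_card => W.
by rewrite inE Mtop_iff.
Qed.

End Concrete.

Theorem mainTheorem5 (n : nat) (hn : 3 <= n) :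
  (forall V : {set {set 'I_n.+1} * {set 'I_n.+1}},
     optimal (Delta n) V ->
     optimal (skeleton (Delta n) (n - 2)) (restrict (skeleton (Delta n) (n - 2)) V))
  /\
  (forall W : {set {set 'I_n.+1} * {set 'I_n.+1}},
     optimal (skeleton (Delta n) (n - 2)) W ->
     exists V, optimal (Delta n) V /\ restrict (skeleton (Delta n) (n - 2)) V = W)
  /\
  (forall W : {set {set 'I_n.+1} * {set 'I_n.+1}},
     optimal (skeleton (Delta n) (n - 2)) W ->
     #|[set V | optimal (Delta n) V &&
                (restrict (skeleton (Delta n) (n - 2)) V == W)]| = n.+1)
  /\
  f n = n.+1 * #|[set W : {set {set 'I_n.+1} * {set 'I_n.+1}} |
                  M_top_simplex (skeleton (Delta n) (n - 2)) W]|.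
Proof.
split; first exact: part1.
split; first by move=> W Wopt; have [V [oV rV _]] := ext_exists hn ord0 Wopt; exists V.
split; first exact: fiber_card.
exact: f_formula.
Qed.
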